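(* Let $W=\langle s,t: s^2=t^2=(st)^m=1\rangle$ be a Coxeter group of rank $2$ with $m\ge2$ the order of $st$. Then the element $a_sa_t$ generates the top (degree $2$) component of the Orlik–Solomon algebra $A(W)$ as a right $\mathbb CW$-module.
   Context: $W$ acts as a reflection group on $\mathbb C^2$; $T$ is its set of reflections and $H_t$ the reflecting hyperplane of $t\in T$. $A(W)$ is the $\mathbb C$-algebra generated by $a_t$ ($t\in T$) subject to $a_ta_{t'}=-a_{t'}a_t$ and $\sum_{i=1}^p(-1)^ia_{t_1}\cdots\widehat{a_{t_i}}\cdots a_{t_p}=0$ whenever $\{H_{t_1},\dots,H_{t_p}\}$ is linearly dependent; $W$ acts by $a_t.w=a_{w^{-1}tw}$ extended to algebra automorphisms. The degree $2$ component is spanned by products $a_{t}a_{t'}$ with $H_t\ne H_{t'}$. *)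

(* Defs.v *)
From HB Require Import structures.
From mathcomp Require Import all_boot all_order all_algebra.
Set Implicit Arguments. Unset Strict Implicit. Unset Printing Implicit Defensive.
Import Order.TTheory GRing.Theory Num.Theory.
Local Open Scope ring_scope.

(* Dihedral group W of order 2m acting as a reflection group on C^2
   (row vectors, v |-> v *m w), built from a primitive m-th root of unity z:
     rotation  rot k  = diag(z^k, z^-k),
     reflection refl k = [[0, z^k], [z^-k, 0]]   (k < m).
   refl 0 * refl 1 = rot (-1) has order m, so s := refl 0, t := refl 1 are
   Coxeter generators with s^2 = t^2 = (st)^m = 1. *)

Section Dihedral.
Variables (C : numClosedFieldType) (m : nat) (z : C).

Definition rot (k : nat) : 'M[C]_2 :=
  \matrix_(i < 2, j < 2)
     (if i == j then (if i == 0 :> nat then z ^+ k else (z ^+ k)^-1) else 0).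

Definition refl (k : nat) : 'M[C]_2 :=
  \matrix_(i < 2, j < 2)
     (if i == j then 0 else (if i == 0 :> nat then z ^+ k else (z ^+ k)^-1)).

Definition Wgrp : seq 'M[C]_2 :=
  [seq rot k | k <- iota 0 m] ++ [seq refl k | k <- iota 0 m].

(* The set T of reflections of W, indexed by 'I_m : t_k = refl k. *)

Definition hyp (k : 'I_m) : 'M[C]_2 := kermx (refl k - 1%:M).

(* {H_{t_1},...,H_{t_p}} linearly dependent: codim of the intersection < p. *)
Definition hyp_dep (ks : seq 'I_m) : bool :=
  (2 - \rank (\bigcap_(k <- ks) hyp k)%MS < size ks)%N.

Definition actT (w : 'M[C]_2) (k : 'I_m) : 'I_m :=
  odflt k [pick k' : 'I_m | refl k' == invmx w *m refl k *m w].

(* Degree-2 part of the free (tensor) algebra on the a_t: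
   an element x : 'M[C]_(m,m) stands for \sum_{k,l} x k l a_{t_k} a_{t_l}. *)
Definition e2 (k l : 'I_m) : 'M[C]_(m, m) := delta_mx k l.

Definition act2 (x : 'M[C]_(m, m)) (w : 'M[C]_2) : 'M[C]_(m, m) :=
  \sum_(k < m) \sum_(l < m) x k l *: e2 (actT w k) (actT w l).

(* Degree-2 component of the two-sided ideal of Orlik-Solomon relations:
   spanned by
   - anticommutators a_k a_l + a_l a_k,
   - degree-2 OS relations (p = 3) for dependent triples,
   - degree-1 OS relations (p = 2) for dependent pairs, multiplied on the
     left or on the right by a generator a_u. *)
Definition anticomm_rels : seq 'M[C]_(m, m) :=
  [seq e2 kl.1 kl.2 + e2 kl.2 kl.1 | kl <- enum [set: 'I_m * 'I_m]].

Definition OS3_rels : seq 'M[C]_(m, m) :=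
  [seq - e2 k.1.2 k.2 + e2 k.1.1 k.2 - e2 k.1.1 k.1.2
   | k <- enum [set: ('I_m * 'I_m) * 'I_m]
   & hyp_dep [:: k.1.1; k.1.2; k.2]].

Definition OS2_rels : seq 'M[C]_(m, m) :=
  [seq - e2 k.1.2 k.2 + e2 k.1.1 k.2
   | k <- enum [set: ('I_m * 'I_m) * 'I_m] & hyp_dep [:: k.1.1; k.1.2]]
  ++
  [seq - e2 k.2 k.1.2 + e2 k.2 k.1.1
   | k <- enum [set: ('I_m * 'I_m) * 'I_m] & hyp_dep [:: k.1.1; k.1.2]].

Definition OS_ideal2 : {vspace 'M[C]_(m, m)} :=
  (<< anticomm_rels >> + << OS3_rels >> + << OS2_rels >>)%VS.

(* A(W)_2 = 'M_(m,m) / OS_ideal2.  x generates A(W)_2 as a right CW-module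
   iff the images of the x.w (w in W) span A(W)_2. *)
Definition generates_top (x : 'M[C]_(m, m)) : Prop :=
  (<< [seq act2 x w | w <- Wgrp] >> + OS_ideal2)%VS = fullv.

End Dihedral.

(* Main.v *)
Require Import Defs.
From HB Require Import structures.
From mathcomp Require Import all_boot all_order all_algebra.
From mathcomp Require Import ring zify.
Import Order.TTheory GRing.Theory Num.Theory.
Local Open Scope ring_scope.

Section Proof.
Variables (C : numClosedFieldType) (m : nat) (z : C).
Hypotheses (hm : (1 < m)%N) (hz : m.-primitive_root z).

Lemma z_neq0 k : z ^+ k != 0.
Proof.
apply: expf_neq0; apply/eqP => z0; have := prim_expr_order hz.
by rewrite z0 expr0n; case: m hm => // n _ /=; move/eqP; rewrite eq_sym oner_eq0.
Qed.

Lemma mx2P (A B : 'M[C]_2) :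
  A 0 0 = B 0 0 -> A 0 1 = B 0 1 -> A 1 0 = B 1 0 -> A 1 1 = B 1 1 -> A = B.
Proof.
move=> h1 h2 h3 h4; apply/matrixP => i j.
by case: i => [[|[|i]] Hi]; case: j => [[|[|j]] Hj] //;
  [ move: h1 | move: h2 | move: h3 | move: h4 ]; congr (_ = _); apply: congr2; apply: val_inj.
Qed.

Lemma refl_conj j k n : z ^+ n * z ^+ k = z ^+ j * z ^+ j ->
  refl z j *m refl z k *m refl z j = refl z n.
Proof.
move=> h.
have e : z ^+ n = z ^+ j * z ^+ j / z ^+ k by rewrite -h mulfK ?z_neq0.
have hn := z_neq0 n; have hk := z_neq0 k; have hj := z_neq0 j.
apply: mx2P; rewrite !mxE !big_ord_recl big_ord0 /= !mxE !big_ord_recl !big_ord0 /= !mxE /=.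
all: rewrite ?e ?(mul0r,mulr0,add0r,addr0) //; field; by rewrite ?hj ?hk.
Qed.

Lemma rot_conj a b k n : z ^+ a * z ^+ b = 1 -> z ^+ n = z ^+ k * z ^+ b * z ^+ b ->
  Defs.rot z b *m refl z k *m Defs.rot z a = refl z n.
Proof.
move=> h e.
have hn := z_neq0 n; have hk := z_neq0 k; have ha := z_neq0 a; have hb := z_neq0 b.
have ea : z ^+ a = (z ^+ b)^-1 by rewrite -[z ^+ a](mulfK hb) h mul1r.
apply: mx2P; rewrite !mxE !big_ord_recl big_ord0 /= !mxE !big_ord_recl !big_ord0 /= !mxE /=.
all: rewrite ?e ?ea ?(mul0r,mulr0,add0r,addr0) //; field; by rewrite ?hb ?hk.
Qed.

Lemma rot_inv a b : z ^+ a * z ^+ b = 1 -> Defs.rot z a *m Defs.rot z b = 1%:M.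
Proof.
move=> h.
have ha := z_neq0 a; have hb := z_neq0 b.
have ea : z ^+ a = (z ^+ b)^-1 by rewrite -[z ^+ a](mulfK hb) h mul1r.
apply: mx2P; rewrite !mxE !big_ord_recl big_ord0 /= !mxE /=.
all: rewrite ?ea ?(mul0r,mulr0,add0r,addr0) //; field; by rewrite ?hb.
Qed.

Lemma refl_inv j : refl z j *m refl z j = 1%:M.
Proof.
have hj := z_neq0 j.
apply: mx2P; rewrite !mxE !big_ord_recl big_ord0 /= !mxE /=.
all: rewrite ?(mul0r,mulr0,add0r,addr0) //; field; by rewrite ?hj.
Qed.

Lemma invmx_eq (A B : 'M[C]_2) : A *m B = 1%:M -> invmx A = B.
Proof.
move=> h; have [uA _] := mulmx1_unit h.
by rewrite -[invmx A]mulmx1 -h mulmxA mulVmx // mul1mx.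
Qed.

Lemma refl_inj (a b : 'I_m) : refl z a = refl z b -> a = b.
Proof.
move=> /matrixP /(_ 0 1); rewrite !mxE /= => /eqP.
rewrite (eq_prim_root_expr hz) !modn_small // => /eqP; apply: val_inj.
Qed.

Lemma actT_eq w (k k' : 'I_m) : refl z k' = invmx w *m refl z k *m w -> actT z w k = k'.
Proof.
move=> h; rewrite /actT; case: pickP => [k'' /eqP h'| /(_ k')]; last by rewrite h eqxx.
by apply: refl_inj; rewrite h h'.
Qed.


Let m0 : (0 < m)%N := ltnW hm.
Definition om (n : nat) : 'I_m := Ordinal (ltn_pmod n m0).

Lemma act2_e2 w (a b : 'I_m) : act2 z (e2 C a b) w = e2 C (actT z w a) (actT z w b).
Proof.
rewrite /act2 (bigD1 a) //= (bigD1 b) //= big1 => [|l lb]; last first.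
  by rewrite /e2 mxE eqxx (negbTE lb) andbF scale0r.
rewrite big1 => [|k ka]; last first.
  by rewrite big1 // => l _; rewrite /e2 mxE (negbTE ka) scale0r.
by rewrite /e2 mxE !eqxx scale1r addr0 addr0.
Qed.

Lemma actT_rot j q (k : 'I_m) : z ^+ j * z ^+ q = 1 ->
  actT z (Defs.rot z j) k = om (k + q.*2).
Proof.
move=> h; apply: actT_eq; rewrite (invmx_eq _ _ (rot_inv _ _ h)).
rewrite (rot_conj _ _ k ((k + q.*2) %% m) h) //= (prim_expr_mod hz) -addnn !exprD mulrA //.
Qed.

Lemma actT_refl j n (k : 'I_m) : z ^+ n * z ^+ k = z ^+ j * z ^+ j ->
  actT z (refl z j) k = om n.
Proof.
move=> h; apply: actT_eq; rewrite (invmx_eq _ _ (refl_inv j)).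
by rewrite (refl_conj j k (n %% m)) // (prim_expr_mod hz).
Qed.

Definition V := (<< [seq act2 z (e2 C (Ordinal (ltnW hm)) (Ordinal hm)) w | w <- Wgrp m z] >> + OS_ideal2 m z)%VS.

Lemma subA : (<< anticomm_rels C m >> <= V)%VS.
Proof.
rewrite /V /OS_ideal2; apply: subv_trans (addvSr _ _); apply: subv_trans (addvSl _ _).
exact: addvSl.
Qed.

Lemma subB : (<< OS3_rels m z >> <= V)%VS.
Proof.
rewrite /V /OS_ideal2; apply: subv_trans (addvSr _ _); apply: subv_trans (addvSl _ _).
exact: addvSr.
Qed.

Lemma inV_anti (a b : 'I_m) : e2 C a b + e2 C b a \in V.
Proof.
apply: (subvP subA).
apply: memv_span; apply: (map_f (fun kl : 'I_m * 'I_m => e2 C kl.1 kl.2 + e2 C kl.2 kl.1) (x := (a, b))).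
by rewrite mem_enum in_setT.
Qed.

Lemma inV_os3 (a b c : 'I_m) : - e2 C b c + e2 C a c - e2 C a b \in V.
Proof.
apply: (subvP subB).
apply: memv_span; rewrite /OS3_rels.
apply: (map_f (fun k : ('I_m * 'I_m) * 'I_m => - e2 C k.1.2 k.2 + e2 C k.1.1 k.2 - e2 C k.1.1 k.1.2) (x := (a, b, c))).
rewrite mem_filter mem_enum in_setT andbT /hyp_dep /=.
exact: leq_ltn_trans (leq_subr _ _) _.
Qed.

Lemma inV_act w : w \in Wgrp m z -> act2 z (e2 C (Ordinal (ltnW hm)) (Ordinal hm)) w \in V.
Proof.
move=> hw; apply: (subvP (addvSl _ _)); apply: memv_span.
exact: map_f.
Qed.

Lemma E_in i : (i < m)%N -> e2 C (om i) (om i.+1) \in V.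
Proof.
move=> hi; have := odd_double_half i; case: (odd i) => /= hi2.
- set q := i./2 in hi2.
  have hq : (q.+1 < m)%N by move: hi2 hi; rewrite -!muln2; lia.
  have hw : refl z q.+1 \in Wgrp m z.
    by rewrite mem_cat; apply/orP; right; apply: map_f; rewrite mem_iota.
  have := inV_act _ hw; rewrite act2_e2.
  rewrite (actT_refl q.+1 i.+1 (Ordinal (ltnW hm))) ?(actT_refl q.+1 i (Ordinal hm)); last first.
    by rewrite -!exprD /=; congr (_ ^+ _); move: hi2; rewrite -!muln2; lia.
    by rewrite -!exprD /=; congr (_ ^+ _); move: hi2; rewrite -!muln2; lia.
  move=> H; rewrite -[e2 C _ _](addrK (e2 C (om i.+1) (om i))).
  by apply: memvB => //; exact: inV_anti.
- set q := i./2 in hi2.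
  have hq : (q <= m)%N by move: hi2 hi; rewrite -!muln2; lia.
  have hw : Defs.rot z ((m - q) %% m) \in Wgrp m z.
    by rewrite mem_cat; apply/orP; left; apply: map_f; rewrite mem_iota /= ltn_pmod.
  have := inV_act _ hw; rewrite act2_e2.
  have hzq : z ^+ ((m - q) %% m) * z ^+ q = 1.
    by rewrite (prim_expr_mod hz) -exprD subnK // (prim_expr_order hz).
  rewrite (actT_rot _ _ (Ordinal (ltnW hm)) hzq) (actT_rot _ _ (Ordinal hm) hzq) /=.
  by congr (e2 C _ _ \in V); apply: val_inj => /=; rewrite -hi2 -muln2 ?add0n.
Qed.
Lemma zm1 (M : zmodType) (x y w : M) : (- x + y - w) + x + w = y.
Proof. by rewrite addrAC subrK addrC addNKr. Qed.
Lemma zm2 (M : zmodType) (x y w : M) : - (- x + y - w) + y - w = x.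
Proof. by rewrite !opprD !opprK addrAC addrK subrK. Qed.

Lemma om_val (a : 'I_m) : om a = a.
Proof. by apply: val_inj; rewrite /= modn_small. Qed.

Lemma all_in (a b : 'I_m) : e2 C a b \in V.
Proof.
have base : forall k, (k < m)%N -> e2 C (om 0) (om k) \in V.
  elim=> [_|k IH hk].
    by have := inV_os3 (om 0) (om 0) (om 0); rewrite addNr sub0r memvN.
  have h1 := inV_os3 (om 0) (om k) (om k.+1).
  have := memvD (memvD h1 (E_in _ (ltnW hk))) (IH (ltnW hk)).
  by rewrite zm1.
have h := inV_os3 (om 0) a b; rewrite -memvN in h.
have hb := base b (ltn_ord b); have ha := base a (ltn_ord a); rewrite om_val in ha; rewrite om_val in hb.
by have := memvB (memvD h hb) ha; rewrite zm2.
Qed.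
End Proof.

Theorem lemma5p9 (C : numClosedFieldType) (m : nat) (z : C)
    (hm : (1 < m)%N) (hz : m.-primitive_root z) :
  @generates_top C m z
    (@e2 C m (Ordinal (ltnW hm)) (Ordinal hm)).
Proof.
rewrite /generates_top; apply/eqP; rewrite eqEsubv subvf /=; apply/subvP => x _.
rewrite (matrix_sum_delta x); apply: memv_suml => i _; apply: memv_suml => j _.
apply: memvZ; exact: (@all_in C m z hm hz i j).
Qed.
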